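(* Let $T\in\mathbb{N}$, and let $X=\{X_t\}_{t=0}^{T}$ be a state process valued in $\mathcal{X}\subseteq\mathbb{R}^d$ with initial state $X_0\in\mathring{\mathcal{X}}_R$, evolving as $X_{t+1}=H\big(K(X_t,a_t),\varepsilon_{t+1}\big)$ for $t=0,\dots,T-1$, where $\{a_t\}_{t=0}^{T-1}$ is an arbitrary $\{\mathcal{F}_t\}$-adapted $\mathbb{R}^p$-valued process. Let the auxiliary process $X^R$ be defined by $X_0^R=X_0$ and $$X_t^R=X_t\,\mathbb{I}_{\{\tau^R>t\}}+\mathcal{Q}\big(X_{\tau^R\wedge t}\big)\,\mathbb{I}_{\{\tau^R\le t\}},\qquad t=1,\dots,T.$$ Then $X^R$ satisfies, for $t=0,1,\dots,T-1$, $$X_{t+1}^R=X_t^R\,\mathbb{I}_{\{X_t^R\in\partial\mathcal{X}_R\}}+\tilde H\big(K(X_t^R,a_t),\varepsilon_{t+1}\big)\,\mathbb{I}_{\{X_t^R\in\mathring{\mathcal{X}}_R\}},$$ where $\tilde H(k,e)=\mathcal{Q}(H(k,e))$ if $H(k,e)\notin\mathring{\mathcal{X}}_R$ and $\tilde H(k,e)=H(k,e)$ otherwise.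
   Context: Time points are $\mathcal{T}=\{0,1,\dots,T\}$ on a probability space $(\Omega,\mathcal{F},\mathbb{P})$ with filtration $\{\mathcal{F}_t\}_{t\in\mathcal{T}}$. $\varepsilon_1,\dots,\varepsilon_T$ are independent $\mathbb{R}^q$-valued random variables ($\varepsilon_{t+1}$ being $\mathcal{F}_{t+1}$-measurable), $K:\mathbb{R}^{d+p}\to\mathbb{R}^r$ and $H:\mathbb{R}^{r+q}\to\mathbb{R}^d$ are measurable. $\mathcal{X}_R\subseteq\mathcal{X}$ is a bounded set (depending on a truncation parameter $R$) with interior $\mathring{\mathcal{X}}_R$ and boundary $\partial\mathcal{X}_R$, whose closure $\mathrm{cl}(\mathcal{X}_R)$ is compact and strictly convex. $\mathcal{Q}(x)=\arg\inf_{y\in\mathrm{cl}(\mathcal{X}_R)}\|y-x\|$ is the Euclidean nearest-point projection onto $\mathrm{cl}(\mathcal{X}_R)$ (unique, and lying in $\partial\mathcal{X}_R$ when $x\notin\mathring{\mathcal{X}}_R$). The stopping time is $\tau^R=\inf\{t\in\mathcal{T}: X_t\notin\mathring{\mathcal{X}}_R\}$, with $\tau^R=\infty$ if $X_t\in\mathring{\mathcal{X}}_R$ for all $t\in\mathcal{T}$. *)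

(* Defs.v *)
From HB Require Import structures.
From mathcomp Require Import all_boot all_order all_algebra.
From mathcomp Require Import all_classical all_reals all_analysis.
Set Implicit Arguments. Unset Strict Implicit. Unset Printing Implicit Defensive.
Import Order.TTheory GRing.Theory Num.Theory.
Import numFieldNormedType.Exports.
Local Open Scope classical_set_scope.
Local Open Scope ring_scope.

(* R^n is represented by row vectors 'rV[R]_n (with the library topology,
   which is the usual product topology). *)

Definition eucl_norm (R : realType) (n : nat) (v : 'rV[R]_n) : R :=
  Num.sqrt (\sum_(i < n) v ord0 i ^+ 2).

Definition boundary (R : realType) (n : nat) (A : set 'rV[R]_n) : set 'rV[R]_n :=
  closure A `\` interior A.

Definition bounded_eucl (R : realType) (n : nat) (A : set 'rV[R]_n) : Prop :=
  exists M : R, forall x, A x -> eucl_norm x <= M.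

Definition strictly_convex (R : realType) (n : nat) (C : set 'rV[R]_n) : Prop :=
  forall x y, C x -> C y -> x <> y ->
    forall l : R, 0 < l < 1 -> interior C (l *: x + (1 - l) *: y).

(* Euclidean nearest-point projection onto cl(XR):
   Q(x) = arg inf_{y in cl(XR)} |y - x| (a chosen minimiser; it is unique
   when cl(XR) is nonempty, compact and strictly convex). *)
Definition proj_cl (R : realType) (n : nat) (XR : set 'rV[R]_n) (x : 'rV[R]_n)
  : 'rV[R]_n :=
  xget 0 [set y | closure XR y /\
                  forall z, closure XR z -> eucl_norm (y - x) <= eucl_norm (z - x)].

(* Stopping time tau^R = inf {t in {0..T} : X_t not in interior XR},
   None encodes +infinity. *)
Definition tauR (R : realType) (n : nat) (XR : set 'rV[R]_n) (T : nat)
  (x : nat -> 'rV[R]_n) : option nat :=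
  match [seq t <- iota 0 T.+1 | `[< ~ interior XR (x t) >]] with
  | t :: _ => Some t
  | [::] => None
  end.

Definition tau_gt (tau : option nat) (t : nat) : bool :=
  if tau is Some k then (t < k)%N else true.

Definition tau_min (tau : option nat) (t : nat) : nat :=
  if tau is Some k then minn k t else t.

Definition ind (R : realType) (n : nat) (P : Prop) (v : 'rV[R]_n) : 'rV[R]_n :=
  if `[< P >] then v else 0.

Definition XRproc (R : realType) (n : nat) (XR : set 'rV[R]_n) (T : nat)
  (x : nat -> 'rV[R]_n) (t : nat) : 'rV[R]_n :=
  let tau := tauR XR T x in
  if t == 0%N then x 0%N
  else ind (tau_gt tau t) (x t)
     + ind (~~ tau_gt tau t) (proj_cl XR (x (tau_min tau t))).

Definition Htilde (R : realType) (d r q : nat) (XR : set 'rV[R]_d)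
  (H : 'rV[R]_(r + q) -> 'rV[R]_d) (k : 'rV[R]_r) (e : 'rV[R]_q) : 'rV[R]_d :=
  if `[< interior XR (H (row_mx k e)) >] then H (row_mx k e)
  else proj_cl XR (H (row_mx k e)).

(* Main.v *)
Require Import Defs.
From HB Require Import structures.
From mathcomp Require Import all_boot all_order all_algebra.
From mathcomp Require Import all_classical all_reals all_analysis.
From mathcomp Require Import lra.
Import Order.TTheory GRing.Theory Num.Theory.
Import numFieldNormedType.Exports.
Local Open Scope classical_set_scope.
Local Open Scope ring_scope.

Lemma filter_iota_first (p : pred nat) n m k s :
  [seq t <- iota m n | p t] = k :: s ->
  [/\ (m <= k < m + n)%N, p k & forall j, (m <= j < k)%N -> ~~ p j].
Proof.
elim: n m => [|n IH] m //=.
case: ifP => pm.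
  case=> <- _; split => //; first by rewrite leqnn addnS ltnS leq_addr.
  by move=> j; rewrite leqNgt andbC => /andP [] ->.
move=> /IH [/andP [h1 h2] pk hj]; split => //.
  by rewrite addnS -addSn h2 ltnW.
move=> j /andP [mj jk]; have [<-|ne] := eqVneq m j; first by rewrite pm.
by apply: hj; rewrite jk andbT ltn_neqAle ne mj.
Qed.

Lemma tau_some (R : realType) n (XR : set 'rV[R]_n) T (x : nat -> 'rV[R]_n) k :
  tauR XR T x = Some k ->
  [/\ (k <= T)%N, ~ interior XR (x k) &
      forall j, (j < k)%N -> interior XR (x j)].
Proof.
rewrite /tauR; case E : [seq _ <- _ | _] => [|k' s] //= [<-].
have [/andP [_ kT] pk hj] := filter_iota_first _ _ _ _ _ E.
split => //; first by move/asboolP: pk.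
move=> j jk; have := hj j jk => /asboolPn.
by move/contrapT.
Qed.

Lemma tau_none (R : realType) n (XR : set 'rV[R]_n) T (x : nat -> 'rV[R]_n) :
  tauR XR T x = None -> forall j, (j <= T)%N -> interior XR (x j).
Proof.
rewrite /tauR; case E : [seq _ <- _ | _] => [|k' s] // _ j jT.
have : ~~ has (fun t => `[< ~ interior XR (x t) >]) (iota 0 T.+1).
  by rewrite has_filter E.
move/hasPn => /(_ j); rewrite mem_iota leq0n add0n ltnS jT => /(_ isT).
by move/asboolPn/contrapT.
Qed.
Lemma eucl_cont (R : realType) n (x : 'rV[R]_n) :
  continuous (fun y : 'rV[R]_n => eucl_norm (y - x)).
Proof.
have HB : continuous (fun y : 'rV[R]_n => \sum_(i < n) (y - x) ord0 i ^+ 2).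
  apply: continuous_big.
  - exact: add_continuous.
  - move=> i _ z.
    have Hs : {for z, continuous (fun y : 'rV[R]_n => y - x)}.
      have h1 : {for z, continuous (@id 'rV[R]_n)} by move=> A h.
      have h2 : {for z, continuous (fun _ : 'rV[R]_n => x)} by exact: cst_continuous.
      exact: (continuousB h1 h2).
    have Hc := continuous_comp Hs (@coord_continuous R 1 n ord0 i (z - x)).
    under eq_fun do rewrite expr2.
    exact: (cvgM Hc Hc).
move=> y; rewrite /eucl_norm.
exact: (continuous_comp (HB y) (@sqrt_continuous R _)).
Qed.

Lemma eucl_ge0 (R : realType) n (v : 'rV[R]_n) : 0 <= eucl_norm v.
Proof. exact: sqrtr_ge0. Qed.

Lemma eucl_eq0 (R : realType) n (v : 'rV[R]_n) : eucl_norm v = 0 -> v = 0.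
Proof.
move/eqP; rewrite /eucl_norm sqrtr_eq0 => hs.
have hs0 : \sum_(i < n) v ord0 i ^+ 2 = 0.
  by apply/eqP; rewrite eq_le hs sumr_ge0 // => i _; exact: sqr_ge0.
apply/rowP => j; rewrite mxE.
have H0 := psumr_eq0P (fun i (_ : true) => sqr_ge0 (v ord0 i)) hs0. have := H0 j isT.
by move/eqP; rewrite sqrf_eq0 => /eqP.
Qed.

Lemma euclZ (R : realType) n (c : R) (v : 'rV[R]_n) :
  eucl_norm (c *: v) = `|c| * eucl_norm v.
Proof.
rewrite /eucl_norm.
under eq_bigr do rewrite mxE exprMn.
by rewrite -mulr_sumr sqrtrM ?sqr_ge0 // sqrtr_sqr.
Qed.

Lemma proj_spec (R : realType) n (XR : set 'rV[R]_n) (x : 'rV[R]_n) :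
  closure XR !=set0 -> compact (closure XR) ->
  closure XR (proj_cl XR x) /\
  forall z, closure XR z -> eucl_norm (proj_cl XR x - x) <= eucl_norm (z - x).
Proof.
move=> A0 cA; rewrite /proj_cl; apply: (@xgetPex _ 0 [set y | closure XR y /\ forall z, closure XR z -> eucl_norm (y - x) <= eucl_norm (z - x)]).
have [c cin cmin] := EVT_min_rV A0 cA (continuous_subspaceT (@eucl_cont R n x)).
exists c; split; first exact: set_mem.
by move=> z zA; apply: cmin; exact: mem_set.
Qed.

Lemma proj_notint (R : realType) n (XR : set 'rV[R]_n) (x : 'rV[R]_n) :
  closure XR !=set0 -> compact (closure XR) -> ~ interior XR x ->
  ~ interior XR (proj_cl XR x).
Proof.
move=> A0 cA nx; have [yA ymin] := @proj_spec R n XR x A0 cA.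
set y := proj_cl XR x in yA ymin *.
move=> iy.
have [yx0|yx] := eqVneq y x; first by rewrite yx0 in iy.
have : nbhs y XR by exact: iy.
move=> /nbhs_ballP [e /= e0 eb].
set a := `|x - y|.
have a0 : 0 < a by rewrite normr_gt0 subr_eq0 eq_sym.
set l := e / (2 * (a + e)).
have ae0 : 0 < a + e by rewrite addr_gt0.
have l0 : 0 < l by rewrite divr_gt0 // mulr_gt0.
have l1 : l < 1.
  by rewrite /l ltr_pdivrMr ?mulr_gt0 // mul1r; lra.
have la : l * a < e.
  rewrite /l mulrAC ltr_pdivrMr ?mulr_gt0 //; rewrite ltr_pM2l //; lra.
pose z := y + l *: (x - y).
have zX : XR z.
  apply: eb; rewrite -ball_normE /= /z opprD addrA subrr add0r normrN normrZ.
  by rewrite gtr0_norm.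
have := ymin z (subset_closure zX).
have -> : z - x = (1 - l) *: (y - x).
  by rewrite /z scalerBl scale1r scalerBr; apply/rowP => i; rewrite !mxE; lra.
rewrite euclZ gtr0_norm ?subr_gt0 //.
have N0 : 0 < eucl_norm (y - x).
  rewrite lt_neqAle eucl_ge0 andbT eq_sym; apply/eqP => /eucl_eq0 /eqP.
  by rewrite subr_eq0 (negbTE yx).
nra.
Qed.

Lemma ind_T (R : realType) n (P : Prop) (v : 'rV[R]_n) : P -> ind P v = v.
Proof. by move=> hP; rewrite /ind asboolT. Qed.

Lemma ind_F (R : realType) n (P : Prop) (v : 'rV[R]_n) : ~ P -> ind P v = 0.
Proof. by move=> hP; rewrite /ind asboolF. Qed.

Theorem proposition1 (R : realType) (d p q r T : nat)
  (Xset XR : set 'rV[R]_d)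
  (K : 'rV[R]_(d + p) -> 'rV[R]_r) (H : 'rV[R]_(r + q) -> 'rV[R]_d)
  (Omega : Type)
  (X : nat -> Omega -> 'rV[R]_d) (a : nat -> Omega -> 'rV[R]_p)
  (eps : nat -> Omega -> 'rV[R]_q) :
  XR `<=` Xset ->
  bounded_eucl XR ->
  compact (closure XR) ->
  strictly_convex (closure XR) ->
  (forall w t, (t <= T)%N -> Xset (X t w)) ->
  (forall w, interior XR (X 0%N w)) ->
  (forall w t, (t < T)%N ->
     X t.+1 w = H (row_mx (K (row_mx (X t w) (a t w))) (eps t.+1 w))) ->
  forall w t, (t < T)%N ->
    let XRw := XRproc XR T (fun s => X s w) in
    XRw t.+1 =
      ind (boundary XR (XRw t)) (XRw t)
    + ind (interior XR (XRw t))
          (Htilde XR H (K (row_mx (XRw t) (a t w))) (eps t.+1 w)).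
Proof.
move=> _ _ cA _ _ X0 Hdyn w t tT XRw.
set xs := fun s => X s w.
set tau := tauR XR T xs.
have A0 : closure XR !=set0.
  by exists (X 0%N w); apply: subset_closure; apply: interior_subset; exact: X0.
have before s : tau_gt tau s -> XRw s = xs s.
  move=> hs; rewrite /XRw /XRproc -/tau; case: (s =P 0%N) => [->//|/eqP s0].
  rewrite ?(negbTE s0) ind_T // ind_F ?addr0 //.
  by move/negP; rewrite hs.
have after s k : tau = Some k -> (k <= s)%N -> XRw s = proj_cl XR (xs k).
  move=> tk ks; rewrite /XRw /XRproc -/tau tk /=.
  have [kT nk _] := @tau_some R d XR T xs k tk.
  have k0 : k != 0%N by apply/eqP => k0; apply: nk; rewrite k0; exact: X0.
  have s0 : s != 0%N by apply/eqP => s0; move: ks k0; rewrite s0 leqn0 => ->.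
  rewrite (negbTE s0) ind_F; last by rewrite ltnNge ks.
  by rewrite ind_T ?add0r; [rewrite (minn_idPl ks) | rewrite ltnNge ks].
have tauint s : tau_gt tau s -> (s <= T)%N -> interior XR (xs s).
  rewrite /tau_gt; case E: tau => [k|] hs sT.
    by have [_ _ hj] := @tau_some R d XR T xs _ E; exact: hj.
  exact: (@tau_none R d XR T xs E s sT).
have [ht|ht] := boolP (tau_gt tau t).
  have it := tauint t ht (ltnW tT).
  rewrite (before t ht) ind_F; last by case.
  rewrite ind_T // add0r /Htilde -(Hdyn w t tT) -/(xs t.+1).
  have [ht1|ht1] := boolP (tau_gt tau t.+1).
    rewrite (before _ ht1) asboolT //; exact: tauint.
  move: ht ht1; rewrite /tau_gt; case E: tau => [k|] //= tk.
  rewrite -leqNgt => kt; have kt1 : k = t.+1 by apply/eqP; rewrite eqn_leq kt tk.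
  rewrite (after _ _ E) ?kt1 //.
  have [_ nk _] := @tau_some R d XR T xs _ E; rewrite kt1 in nk.
  by rewrite asboolF.
move: ht; rewrite /tau_gt; case E: tau => [k|] //=; rewrite -leqNgt => kt.
have [_ nk _] := @tau_some R d XR T xs _ E.
rewrite (after _ _ E kt) (after _ _ E (leqW kt)).
have [pc _] := @proj_spec R d XR (xs k) A0 cA.
have pn := @proj_notint R d XR (xs k) A0 cA nk.
by rewrite ind_T ?ind_F ?addr0.
Qed.
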